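(* Let $d\ge1$ and let $\theta\in\mathbb R^d$ be split into $B$ disjoint blocks $\theta^{(1)},\dots,\theta^{(B)}$ of sizes $d_1,\dots,d_B\ge1$ with $d_1+\dots+d_B=d$. Let $R_b=-(d_b-2)_+$ and $\pi_{\mathrm{MBS}}(\theta)=\prod_{b=1}^B\|\theta^{(b)}\|^{R_b}\cdot\|\theta\|^{-\gamma}$. For $N>0$ let $p(y\mid\theta)$ be the density of $\mathrm N_d(\theta,N^{-1}I_d)$. If $0\le\gamma<B(R_b+d_b)$ for every $b$, then $m_{\mathrm{MBS}}(y)=\int p(y\mid\theta)\pi_{\mathrm{MBS}}(\theta)\,\mathrm d\theta<\infty$ for every $y\in\mathbb R^d$.
   Context: $(x)_+=\max(x,0)$. *)

(* Defs.v *)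
From HB Require Import structures.
From mathcomp Require Import all_boot all_order all_algebra.
From mathcomp Require Import all_classical all_reals all_analysis.
Set Implicit Arguments. Unset Strict Implicit. Unset Printing Implicit Defensive.
Import Order.TTheory GRing.Theory Num.Theory.
Import numFieldNormedType.Exports.
Local Open Scope classical_set_scope.
Local Open Scope ring_scope.

Section MBS.
Variable R : realType.

(* Lebesgue integral over R^n (points = n-tuples of reals), written as the
   iterated integral of Lebesgue measure on R in each coordinate.  For the
   nonnegative integrands used here this is the integral w.r.t. the
   n-dimensional Lebesgue measure (Tonelli). *)
Fixpoint leb_int_tuple (n : nat) : (n.-tuple R -> \bar R) -> \bar R :=
  match n return (n.-tuple R -> \bar R) -> \bar R with
  | 0 => fun f => f [tuple]
  | n'.+1 => fun f =>
      (\int[@lebesgue_measure R]_(x in [set: R])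
          leb_int_tuple (fun t : n'.-tuple R => f [tuple of x :: t]))%E
  end.

Variables (d B : nat) (blk : 'I_d -> 'I_B).

Definition dimb (b : 'I_B) : nat := #|[set i | blk i == b]|.

Definition Rb (b : 'I_B) : R := - Num.max ((dimb b)%:R - 2) 0.

Definition block_norm (theta : d.-tuple R) (b : 'I_B) : R :=
  Num.sqrt (\sum_(i < d | blk i == b) (tnth theta i) ^+ 2).

Definition tnorm (theta : d.-tuple R) : R :=
  Num.sqrt (\sum_(i < d) (tnth theta i) ^+ 2).

Definition pi_MBS (gamma : R) (theta : d.-tuple R) : R :=
  (\prod_(b < B) powR (block_norm theta b) (Rb b)) * powR (tnorm theta) (- gamma).

Definition gauss_density (N : R) (y theta : d.-tuple R) : R :=
  powR (N / (2 * pi)) (d%:R / 2) *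
  expR (- (N / 2) * \sum_(i < d) (tnth y i - tnth theta i) ^+ 2).

Definition m_MBS (gamma N : R) (y : d.-tuple R) : \bar R :=
  leb_int_tuple (fun theta => (gauss_density N y theta * pi_MBS gamma theta)%:E).

End MBS.

Arguments Rb {R} [d B] blk b.

(* Main.v *)
Require Import Defs.
From HB Require Import structures.
From mathcomp Require Import all_boot all_order all_algebra.
From mathcomp Require Import all_classical all_reals all_analysis.
From mathcomp Require Import measurable_realfun.
From mathcomp Require Import ring lra.
Import Order.TTheory GRing.Theory Num.Theory.
Import numFieldNormedType.Exports.
Local Open Scope ring_scope.

Section PartA.
Context {R : realType}.
Local Notation mu := (@lebesgue_measure R).
Local Open Scope ereal_scope.

Lemma le_int_nm (f g : R -> \bar R) :
  (forall x, 0 <= f x) -> (forall x, f x <= g x) ->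
  \int[mu]_x f x <= \int[mu]_x g x.
Proof.
move=> f0 fg.
have g0 : forall x, 0 <= g x by move=> x; exact: le_trans (f0 x) (fg x).
rewrite (ge0_integralTE mu f0) (ge0_integralTE mu g0) /=.
apply: ge_ereal_sup => z [h hf <-]; apply: ereal_sup_ubound.
by exists h => // x; exact: le_trans (hf x) (fg x).
Qed.

Lemma leb_ge0 n (f : n.-tuple R -> \bar R) :
  (forall t, 0 <= f t) -> 0 <= leb_int_tuple f.
Proof.
elim: n f => [|n IH] f f0 /=; first exact: f0.
by apply: integral_ge0 => x _; apply: IH => t.
Qed.

Lemma leb_le n (f g : n.-tuple R -> \bar R) :
  (forall t, 0 <= f t) -> (forall t, f t <= g t) ->
  leb_int_tuple f <= leb_int_tuple g.
Proof.
elim: n f g => [|n IH] f g f0 fg /=; first exact: fg.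
apply: le_int_nm => x; first by apply: leb_ge0.
by apply: IH.
Qed.

Lemma leb_ext n (f g : n.-tuple R -> \bar R) :
  (forall t, f t = g t) -> leb_int_tuple f = leb_int_tuple g.
Proof. by move=> fg; congr leb_int_tuple; apply/funext. Qed.

Lemma tnth_cons0 n (x : R) (t : n.-tuple R) : tnth [tuple of x :: t] ord0 = x.
Proof. by rewrite (tnth_nth x). Qed.

Lemma tnth_consS n (x : R) (t : n.-tuple R) (i : 'I_n) :
  tnth [tuple of x :: t] (lift ord0 i) = tnth t i.
Proof. by rewrite (tnth_nth x) (tnth_nth x) /=. Qed.

Lemma leb_prod n (F : 'I_n -> R -> \bar R) (c : \bar R) :
  0 <= c -> (forall i x, 0 <= F i x) -> (forall i, measurable_fun [set: R] (F i)) ->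
  leb_int_tuple (fun t : n.-tuple R => c * \prod_(i < n) F i (tnth t i)) =
  c * \prod_(i < n) \int[mu]_x F i x.
Proof.
elim: n F c => [|n IH] F c c0 F0 mF /=.
  by rewrite !big_ord0.
rewrite big_ord_recl.
transitivity (\int[mu]_x ((c * F ord0 x) * \prod_(i < n) \int[mu]_y F (lift ord0 i) y)).
  apply: eq_integral => x _.
  rewrite -IH; last 3 first.
  - by apply: mule_ge0.
  - by move=> i y; apply: F0.
  - by move=> i; apply: mF.
  apply: leb_ext => t.
  by rewrite big_ord_recl tnth_cons0 muleA; congr (_ * _ * _); apply: eq_bigr => i _; rewrite tnth_consS.
rewrite ge0_integralZr //; last 3 first.
- by apply: emeasurable_funM => //; apply: mF.
- by move=> x _; apply: mule_ge0.
- by apply: prode_ge0 => i _; apply: integral_ge0.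
rewrite (ge0_integralZl mu measurableT (mF ord0)) //.
by rewrite muleA.
Qed.

End PartA.

Section PartB.
Context {R : realType}.
Local Notation mu := (@lebesgue_measure R).

Lemma powR_derivable (r x : R) : 0 < x -> derivable (fun y : R => powR y r) x 1.
Proof. by move=> x0; apply: derivable_powR; rewrite in_itv /= andbT x0. Qed.

Lemma cpowR_derivable (c r x : R) : 0 < x -> derivable (fun y : R => c * powR y r) x 1.
Proof. by move=> x0; apply: derivableM => //; exact: powR_derivable. Qed.

Lemma cpowR_cont (c r x : R) : 0 < x -> {for x, continuous (fun y : R => c * powR y r)}.
Proof. by move=> x0; apply/differentiable_continuous/derivable1_diffP; exact: cpowR_derivable. Qed.

Lemma ftc_pow (a e : R) : 0 <= a < 1 -> 0 < e < 1 ->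
  (\int[mu]_(x in `[e, 1%R]) (powR x (-a))%:E <= ((1 - a)^-1)%:E)%E.
Proof.
move=> /andP[a0 a1] /andP[e0 e1].
have a1' : 0 < 1 - a by rewrite subr_gt0.
rewrite (@continuous_FTC2 _ _ (fun x => (1 - a)^-1 * powR x (1 - a))) //.
- rewrite -EFinB lee_fin powR1 mulr1 lerBlDr lerDl.
  by apply: mulr_ge0; [rewrite invr_ge0 ltW|exact: powR_ge0].
- apply: (@continuous_in_subspaceT R R) => x; rewrite inE /= in_itv /= => /andP[ex _].
  apply/differentiable_continuous/derivable1_diffP.
  exact: powR_derivable (lt_le_trans e0 ex).
- split.
  + move=> x; rewrite in_itv /= => /andP[ex _].
    exact: cpowR_derivable (lt_trans e0 ex).
  + by apply: cvg_at_right_filter; apply: cpowR_cont.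
  + by apply: cvg_at_left_filter; apply: cpowR_cont.
- move=> x; rewrite in_itv /= => /andP[ex _].
  have x0 : 0 < x by exact: lt_trans e0 ex.
  rewrite derive1Ml; last exact: powR_derivable.
  rewrite powR_derive1; last by rewrite in_itv /= andbT.
  rewrite mulrA mulVf ?gt_eqF // mul1r.
  by congr (powR x _); rewrite addrAC subrr add0r.
Qed.


End PartB.

Lemma inset_itv (R : realType) (x : R) (I : interval R) : (x \in [set` I]%classic) = (x \in I).
Proof. by apply/idP/idP; rewrite inE /= inE. Qed.

Section PartB2.
Context {R : realType}.
Local Notation mu := (@lebesgue_measure R).
Local Open Scope ereal_scope.

Lemma pos_pow (a : R) : (0 <= a < 1)%R ->
  \int[mu]_(x in `]0%R, 1%R]) (powR x (-a))%:E <= ((1 - a)^-1)%:E.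
Proof.
move=> a01.
pose I n := `[((n.+1%:R)^-1 : R)%R, 1%R].
pose g n := (fun x : R => (powR x (-a))%:E) \_ [set` I n].
have g0 n x : 0 <= g n x by rewrite /g patchE; case: ifP => // _; rewrite lee_fin powR_ge0.
have ndg x : {homo g^~ x : n m / (n <= m)%N >-> n <= m}.
  move=> n m nm; rewrite /g !patchE; case: ifPn => //; last by case: ifP => // _; rewrite lee_fin powR_ge0.
  rewrite !inE /= !in_itv /= => /andP[nx x1].
  rewrite ifT //; rewrite inE /= in_itv /= x1 andbT.
  apply: le_trans nx; rewrite lef_pV2 ?posrE ?ltr0n // ler_nat //.
have mg n : measurable_fun [set: R] (g n).
  apply/(measurable_restrictT _ _).1 => //.
  apply/measurable_EFinP; apply: measurable_funS (measurable_powR _) => //.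
rewrite integral_mkcond.
apply: (@le_trans _ _ (\int[mu]_x (fun x => limn (g^~ x)) x)).
  apply: le_int_nm => x; first by rewrite patchE; case: ifP => // _; rewrite lee_fin powR_ge0.
  rewrite patchE; case: ifPn => [|_]; last first.
    apply: lime_ge; first exact: ereal_nondecreasing_is_cvgn.
    by apply: nearW => n.
  rewrite inE /= in_itv /= => /andP[x0 x1].
  apply: lime_ge; first exact: ereal_nondecreasing_is_cvgn.
  exists (Num.Def.trunc x^-1) => // n /= Nn.
  rewrite /g patchE ifT // inE /= in_itv /= x1 andbT.
  rewrite -[x]invrK lef_pV2 ?posrE ?invr_gt0 ?ltr0n //.
  apply/ltW/(lt_le_trans (truncnS_gt _)); rewrite ler_nat //.
rewrite (monotone_convergence mu measurableT mg) //.
apply: lime_le.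
  apply: ereal_nondecreasing_is_cvgn => n m nm.
  apply: le_int_nm => x //; exact: ndg.
exists 1%N => // n /= n1.
rewrite /g -integral_mkcond /I.
apply: ftc_pow => //.
rewrite invr_gt0 ltr0n /= invf_lt1 ?ltr0n // ltr1n ltnS //.
Qed.


Lemma sym_pow (a : R) : (0 <= a < 1)%R ->
  \int[mu]_(x in `[(-1)%R, 1%R]) (powR `|x| (-a))%:E <= ((1 - a)^-1)%:E + ((1 - a)^-1)%:E.
Proof.
move=> a01.
pose q := fun x : R => (powR `|x| (-a))%:E.
have q0 x : 0 <= q x by rewrite lee_fin powR_ge0.
have mq : measurable_fun [set: R] q.
  by apply/measurable_EFinP; apply: measurableT_comp (measurable_powR _) (@normr_measurable R _).
pose Ppos := q \_ [set` `[0%R, 1%R]].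
pose Pneg := q \_ [set` `[(-1)%R, 0%R]].
have P0 (I : interval R) x : 0 <= (q \_ [set` I]) x by rewrite patchE; case: ifP.
have mP (I : interval R) : measurable_fun [set: R] (q \_ [set` I]).
  by apply/(measurable_restrictT _ _).1 => //; apply: measurable_funS mq.
rewrite integral_mkcond.
apply: (@le_trans _ _ (\int[mu]_x (Pneg x + Ppos x))).
  apply: le_int_nm => x //; rewrite /Pneg /Ppos !patchE.
  case: ifPn; last by move=> _; apply: adde_ge0; [exact: (P0 `[(-1)%R, 0%R]) | exact: (P0 `[0%R, 1%R])].
  rewrite inset_itv in_itv /= => /andP[x1 x2].
  have [x0|x0] := leP x 0%R.
    rewrite ifT; last by rewrite inset_itv in_itv /= x1 x0.
    by rewrite leeDl //; case: ifP.
  rewrite [X in _ <= X + _]ifF; last by rewrite inset_itv in_itv /= (leNgt x 0%R) x0 andbF.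
  by rewrite ifT ?add0e // inset_itv in_itv /= x2 andbT ltW.
rewrite ge0_integralD //.
have HP : \int[mu]_x Ppos x <= ((1 - a)^-1)%:E.
  rewrite /Ppos -integral_mkcond -integral_itv_obnd_cbnd; last by apply: measurable_funS mq.
  rewrite (_ : \int[mu]_(x in `]0%R, 1%R]) q x = \int[mu]_(x in `]0%R, 1%R]) (powR x (-a))%:E); first exact: pos_pow.
  by apply: eq_integral => x; rewrite inset_itv in_itv /= => /andP[x0 _]; rewrite /q gtr0_norm.
apply: (@leeD R); last exact: HP.
apply: le_trans HP.
have -> : \int[mu]_x Pneg x = \int[mu]_(x in `]-oo, 0%R]) Ppos (- x)%R.
  rewrite [RHS]integral_mkcond; apply: eq_integral => x _.
  rewrite /Pneg /Ppos !patchE.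
  rewrite !inset_itv !in_itv /= oppr_ge0 lerNl.
  by case: (leP x 0%R) => x0; case: ((-1)%R <= x)%R; rewrite /= ?andbT ?andbF ?x0 //= /q normrN.
rewrite -ge0_integration_by_substitution0 //.
- by apply: ge0_subset_integral => //; [exact: (mP `[0%R, 1%R]) | move=> x _; exact: (P0 `[0%R, 1%R])].
- exact: (mP _).
- by move=> x; apply: P0.
- by move=> x _; apply: P0.
- exact: (mP _).
- by move=> x _; apply: P0.
- exact: (mP _).
Qed.


Definition Hs (a x : R) : \bar R := if x == 0%R then +oo else (powR `|x| (-a))%:E.

Lemma Hs_meas (a : R) : measurable_fun [set: R] (Hs a).
Proof.
rewrite /Hs; apply: measurable_fun_ifT.
- exact: (measurable_realfun.measurable_fun_eqr (f := id) (g := cst 0%R)).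
- exact: measurable_cst.
- by apply/measurable_EFinP; apply: measurableT_comp (measurable_powR _) (@normr_measurable R _).
Qed.

Lemma Hs_ge0 (a x : R) : 0 <= Hs a x.
Proof. by rewrite /Hs; case: ifP => // _; rewrite lee_fin powR_ge0. Qed.

Lemma one_dim (a : R) (E : R -> R) : (0 <= a < 1)%R ->
  measurable_fun [set: R] E -> (forall x, 0 <= E x <= 1)%R ->
  \int[mu]_x (E x)%:E < +oo ->
  \int[mu]_x ((E x)%:E * Hs a x) < +oo.
Proof.
move=> a01 mE E01 iE.
have E0 x : (0 <= E x)%R by case/andP: (E01 x).
pose q := fun x : R => (powR `|x| (-a))%:E.
have mq : measurable_fun [set: R] q.
  by apply/measurable_EFinP; apply: measurableT_comp (measurable_powR _) (@normr_measurable R _).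
have mG' : measurable_fun [set: R] (fun x => (E x)%:E * q x).
  by apply: emeasurable_funM => //; apply/measurable_EFinP.
have mG : measurable_fun [set: R] (fun x => (E x)%:E * Hs a x).
  by apply: emeasurable_funM => //; [apply/measurable_EFinP | exact: Hs_meas].
have mD : measurable ([set: R] `\ 0%R) by apply: measurableD.
rewrite -(@integral_setD1 _ _ 0%R); last 2 first.
- exact: mD.
- exact: measurable_funS mG.
rewrite (_ : \int[mu]_(x in [set: R] `\ 0%R) ((E x)%:E * Hs a x) =
             \int[mu]_(x in [set: R] `\ 0%R) ((E x)%:E * q x)); last first.
  apply: eq_integral => x; rewrite inE /= => -[_ /eqP x0].
  by rewrite /Hs (negbTE x0).
rewrite integral_setD1 //; last exact: measurable_funS mG'.
pose P := q \_ [set` `[(-1)%R, 1%R]].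
have mP : measurable_fun [set: R] P.
  by apply/(measurable_restrictT _ _).1 => //; apply: measurable_funS mq.
have P0 x : 0 <= P x by rewrite /P patchE; case: ifP => // _; rewrite lee_fin powR_ge0.
apply: (@le_lt_trans _ _ (\int[mu]_x ((E x)%:E + P x))).
  apply: le_int_nm => x; first by rewrite mule_ge0 // lee_fin ?E0 ?powR_ge0.
  rewrite /P patchE; case: ifPn => [_|].
    rewrite -EFinD lee_fin; apply: (@le_trans _ _ (`|x| `^ (- a))%R).
      by rewrite ler_piMl ?powR_ge0 //; case/andP: (E01 x).
    by rewrite lerDr.
  rewrite inset_itv in_itv /= negb_and -!ltNge => H.
  have x1 : (1 <= `|x|)%R.
    case/orP: H => H.
      by rewrite ltr0_norm ?(lt_trans H) // lerNr ltW.
    by rewrite gtr0_norm ?(lt_trans _ H) // ltW.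
  rewrite adde0 lee_fin ler_piMr //.
  by rewrite -[X in (_ <= X)%R](powRr0 `|x|); apply: ler_powR => //; rewrite oppr_le0; case/andP: a01.
rewrite ge0_integralD //.
- apply: lte_add_pinfty => //.
  rewrite /P -integral_mkcond /q.
  apply: le_lt_trans; first exact: (sym_pow a a01).
  by rewrite -EFinD ltry.
- by move=> x _; rewrite lee_fin.
- exact/measurable_EFinP.
Qed.


Lemma gauss_fin (N y : R) : (0 < N)%R ->
  \int[mu]_x (expR (- (N / 2) * (y - x) ^+ 2))%:E < +oo.
Proof.
move=> N0.
pose s := Num.sqrt N^-1.
have s0 : s != 0%R by rewrite sqrtr_eq0 -ltNge invr_gt0.
have p0 : normal_peak s != 0%R by rewrite gt_eqF // normal_peak_gt0.
have eq x : expR (- (N / 2) * (y - x) ^+ 2) = ((normal_peak s)^-1 * normal_pdf y s x)%R.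
  rewrite normal_pdfE // mulKf // /normal_fun sqr_sqrtr ?invr_ge0 ?ltW //.
  congr expR; rewrite -(sqrrN (y - x)) opprB.
  field; rewrite gt_eqF //.
rewrite (_ : \int[mu]_x _ = \int[mu]_x (((normal_peak s)^-1)%:E * (normal_pdf y s x)%:E)); last first.
  by apply: eq_integral => x _; rewrite eq EFinM.
rewrite ge0_integralZl_EFin //.
- by rewrite integral_normal_pdf mule1 ltry.
- by move=> x _; rewrite lee_fin normal_pdf_ge0.
- by apply/measurable_EFinP; exact: measurable_normal_pdf.
- by rewrite invr_ge0 normal_peak_ge0.
Qed.

End PartB2.


Section PartC.
Context {R : realType}.

Lemma powR_pos (a x : R) : 0 < a -> powR a x = expR (x * ln a).
Proof. by move=> a0; rewrite /powR gt_eqF. Qed.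

Variables (d B : nat) (blk : 'I_d -> 'I_B).

Definition alpha (gamma : R) (i : 'I_d) : R :=
  - (Rb blk (blk i) - gamma / B%:R) / (dimb blk (blk i))%:R.

Lemma sum_sub_le (P : pred 'I_d) (f : 'I_d -> R) :
  (forall i, 0 <= f i) -> \sum_(i | P i) f i <= \sum_i f i.
Proof. by move=> f0; rewrite big_mkcond; apply: ler_sum => i _; case: ifP. Qed.

Lemma coord_le_block (theta : d.-tuple R) (i : 'I_d) :
  `|tnth theta i| <= block_norm blk theta (blk i).
Proof.
rewrite /block_norm -sqrtr_sqr ler_sqrt; last by apply: sumr_ge0 => j _; apply: sqr_ge0.
rewrite (bigD1 i) //= lerDl; by apply: sumr_ge0 => j _; apply: sqr_ge0.
Qed.

Lemma block_le_norm (theta : d.-tuple R) (b : 'I_B) :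
  block_norm blk theta b <= tnorm theta.
Proof.
rewrite /block_norm /tnorm ler_sqrt; last by apply: sumr_ge0 => j _; apply: sqr_ge0.
by apply: sum_sub_le => i; apply: sqr_ge0.
Qed.

Lemma pi_bound (gamma : R) (theta : d.-tuple R) :
  (0 < B)%N -> (forall b, (1 <= dimb blk b)%N) -> 0 <= gamma ->
  (forall i, tnth theta i != 0) ->
  pi_MBS blk gamma theta <= \prod_(i < d) powR `|tnth theta i| (- alpha gamma i).
Proof.
move=> B0 db g0 th0.
set nb := block_norm blk theta; set nt := tnorm theta.
have nb0 b : 0 < nb b.
  have := db b; rewrite /dimb => /card_gt0P[i]; rewrite inE => /eqP <-.
  by apply: lt_le_trans (coord_le_block theta i); rewrite normr_gt0.
have nt0 : 0 < nt by apply: lt_le_trans (nb0 (Ordinal B0)) (block_le_norm _ _).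
have Bn0 : (B%:R : R) != 0 by rewrite pnatr_eq0 -lt0n.
have db0 b : ((dimb blk b)%:R : R) != 0 by rewrite pnatr_eq0 -lt0n.
rewrite /pi_MBS.
under eq_bigr => b _ do rewrite (powR_pos _ _ (nb0 b)).
under [X in _ <= X]eq_bigr => i _ do rewrite powR_pos ?normr_gt0 //.
rewrite (powR_pos _ _ nt0) -!expR_sum -expRD ler_expR.
set e := fun b : 'I_B => Rb blk b - gamma / B%:R.
have e0 b : e b <= 0.
  rewrite /e /Rb; have h1 : 0 <= Num.max ((dimb blk b)%:R - 2) (0 : R) by rewrite le_max lexx orbT.
  have h2 : 0 <= gamma / B%:R by rewrite divr_ge0.
  lra.
have step1 : - gamma * ln nt <= \sum_(b < B) (- (gamma / B%:R)) * ln (nb b).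
  have -> : - gamma * ln nt = \sum_(b < B) (- (gamma / B%:R)) * ln nt.
    rewrite sumr_const card_ord -mulr_natr.
    by field.
  apply: ler_sum => b _; apply: ler_wnM2l.
    by rewrite oppr_le0 divr_ge0.
  by rewrite ler_ln ?posrE // block_le_norm.
apply: (le_trans (lerD (lexx _) step1)).
rewrite -big_split /=.
under eq_bigr => b _ do rewrite -mulrDl -/(e b).
have step2 b : e b * ln (nb b) <=
    (e b / (dimb blk b)%:R) * \sum_(i | blk i == b) ln `|tnth theta i|.
  have -> : e b * ln (nb b) = (e b / (dimb blk b)%:R) * ((dimb blk b)%:R * ln (nb b)).
    by field.
  apply: ler_wnM2l; first by rewrite pmulr_lle0 // invr_gt0 ltr0n; apply: db.
  have -> : (dimb blk b)%:R * ln (nb b) = \sum_(i | blk i == b) ln (nb b).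
    rewrite /dimb mulr_natl -sumr_const; apply: eq_bigl => i; by apply/idP/idP; rewrite inE.
  apply: ler_sum => i /eqP <-.
  by rewrite ler_ln ?posrE ?normr_gt0 // coord_le_block.
apply: (le_trans (ler_sum _ (fun b _ => step2 b))).
rewrite (partition_big blk xpredT) //=.
apply: ler_sum => b _; rewrite mulr_sumr; apply: ler_sum => i /eqP bi.
by rewrite /alpha bi -/(e b) [- e b / _]mulNr opprK.
Qed.

End PartC.
Arguments alpha {R d B} blk gamma i.
Arguments pi_bound {R d B} blk gamma theta.


Theorem lemma10 (R : realType) (d B : nat) (blk : 'I_d -> 'I_B) (gamma N : R) :
  (1 <= d)%N ->
  (forall b : 'I_B, (1 <= dimb blk b)%N) ->
  0 < N ->
  (forall b : 'I_B, 0 <= gamma /\ gamma < B%:R * (Rb blk b + (dimb blk b)%:R)) ->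
  forall y : d.-tuple R, (m_MBS blk gamma N y < +oo)%E.
Proof.
move=> d1 db N0 hg y.
have B0 : (0 < B)%N by apply: (leq_ltn_trans _ (ltn_ord (blk (Ordinal d1)))).
have g0 : 0 <= gamma := (hg (blk (Ordinal d1))).1.
have Bpos : 0 < (B%:R : R) by rewrite ltr0n.
pose K := powR (N / (2 * pi)) (d%:R / 2).
have K0 : 0 < K by apply: powR_gt0; rewrite divr_gt0 // mulr_gt0 // pi_gt0.
pose E (i : 'I_d) (x : R) := expR (- (N / 2) * (tnth y i - x) ^+ 2).
pose F i x := ((E i x)%:E * Hs (alpha blk gamma i) x)%E.
have al01 i : 0 <= alpha blk gamma i < 1.
  have [_ hb] := hg (blk i).
  have dpos : 0 < ((dimb blk (blk i))%:R : R) by rewrite ltr0n; apply: db.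
  rewrite /alpha /Rb.
  set D := ((dimb blk (blk i))%:R : R) in hb dpos *.
  set M := Num.max (D - 2) 0 in hb *.
  have M0 : 0 <= M by rewrite le_max lexx orbT.
  have gB : 0 <= gamma / B%:R by rewrite divr_ge0 // ltW.
  have gB1 : gamma / B%:R < - M + D by rewrite ltr_pdivrMr // mulrC.
  apply/andP; split.
    by apply: divr_ge0; [lra | exact: ltW].
  by rewrite ltr_pdivrMr // mul1r; lra.
have mE i : measurable_fun [set: R] (E i).
  apply: measurableT_comp => //; apply: measurable_funM => //.
  by apply: measurable_funX; apply: measurable_funB.
have E01 i x : 0 <= E i x <= 1.
  rewrite expR_ge0 /= expR_le1 mulNr oppr_le0 mulr_ge0 ?sqr_ge0 //.
  by rewrite divr_ge0 ?ltW.
have Ffin i : (\int[lebesgue_measure]_x F i x < +oo)%E.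
  by apply: one_dim => //; apply: gauss_fin.
have F0 i x : (0 <= F i x)%E by apply: mule_ge0; [rewrite lee_fin expR_ge0 | apply: Hs_ge0].
have mF i : measurable_fun [set: R] (F i).
  by apply: emeasurable_funM; [apply/measurable_EFinP | apply: Hs_meas].
rewrite /m_MBS.
apply: (@le_lt_trans _ _ (leb_int_tuple (fun t : d.-tuple R => K%:E * \prod_(i < d) F i (tnth t i))%E)).
  apply: leb_le => theta.
    rewrite lee_fin; apply: mulr_ge0.
      by apply: mulr_ge0; [apply: powR_ge0 | apply: expR_ge0].
    by apply: mulr_ge0; [apply: prodr_ge0 => b _; apply: powR_ge0 | apply: powR_ge0].
  have [allnz|] := boolP [forall i, tnth theta i != 0].
    have H i : tnth theta i != 0 by move/forallP: allnz; apply.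
    have HF i : F i (tnth theta i) =
        (E i (tnth theta i) * powR `|tnth theta i| (- alpha blk gamma i))%:E.
      by rewrite /F /Hs (negbTE (H i)) EFinM.
    under [X in (_ <= _ * X)%E]eq_bigr => i _ do rewrite HF.
    rewrite prodEFin -EFinM lee_fin big_split /=.
    rewrite /gauss_density -/K mulr_sumr expR_sum -mulrA.
    apply: ler_wpM2l; first exact: ltW.
    apply: ler_wpM2l; first by apply: prodr_ge0 => i _; apply: expR_ge0.
    exact: pi_bound.
  rewrite negb_forall => /existsP[j]; rewrite negbK => /eqP thj.
  have Fpos i x : (0 < F i x)%E.
    apply: mule_gt0; first by rewrite lte_fin expR_gt0.
    rewrite /Hs; case: ifPn => // x0; rewrite lte_fin powR_gt0 // normr_gt0 //.
  rewrite (bigD1 j) //= {1}/F /Hs thj eqxx [X in (_ * (X * _))%E]muleC gt0_mulye ?lte_fin ?expR_gt0 //.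
  rewrite gt0_mulye; last first.
    by apply: (big_ind (fun x => 0 < x)%E) => // u v; apply: mule_gt0.
  by rewrite muleC gt0_mulye ?lte_fin // leey.
rewrite leb_prod //; last by rewrite lee_fin ltW.
rewrite ltey_eq; apply/orP; left.
rewrite fin_numM // prode_fin_num // => i _.
by rewrite ge0_fin_numE ?Ffin //; apply: integral_ge0 => x _.
Qed.
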